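(* Assume the setting in the context. For every choice of real coefficients $\{(\alpha_k,\beta_k)\}_{k=2}^K$ with $\alpha_k+\beta_k=1$ for all $k=2,\dots,K$, and for every $x\in\mathbb{R}^N$, $$T(x)=\sum_{k=1}^K L_k(x_{\mathcal C_k}).$$
   Context: Setting. Let $V=\{1,\dots,N\}$ and let $\mathcal G=(V,\mathcal E)$ be an undirected decomposable graph whose maximal cliques form a perfect sequence $\mathcal C_1,\dots,\mathcal C_K$. For $k=1,\dots,K$ define the histories $\mathcal H_k=\mathcal C_1\cup\cdots\cup\mathcal C_k$. For $k=2,\dots,K$ define the separators $\mathcal S_k=\mathcal H_{k-1}\cap\mathcal C_k$. Perfectness means that for each $k\ge2$ there is $j<k$ with $\mathcal S_k\subseteq\mathcal C_j$. For $k=2,\dots,K$ let $q(k)=\min\{j:\mathcal S_k\subseteq\mathcal C_j\}$, so that $q(k)<k$. For $j=1,\dots,K$ let $\mathcal Q_j=\{k\in\{2,\dots,K\}:q(k)=j\}$. Let $\Sigma\in\mathbb R^{N\times N}$ be symmetric positive definite and Markov with respect to $\mathcal G$, i.e. $(\Sigma^{-1})_{i,j}=0$ whenever $i\neq j$ and $\{i,j\}\notin\mathcal E$. Notation. For $U\subseteq V$: - $\Sigma_U$ is the principal submatrix of $\Sigma$ with rows and columns indexed by $U$; - $I_U$ is the $|U|\times|U|$ identity matrix; - $x_U$ is the subvector of $x$ with entries indexed by $U$. For $U\subseteq W\subseteq V$ and a matrix $A$ indexed by $U$, $[A]^W$ is the $|W|\times|W|$ matrix indexed by $W$ that equals $A$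 on $U\times U$ and is $0$ elsewhere. Test statistic. Define $T(x)=x^Tx-x^T\Sigma^{-1}x-\ln\det\Sigma$. Local matrices and constants. Given real coefficients $\alpha_k,\beta_k$ ($k=2,\dots,K$), define $$J_1=\big(I_{\mathcal C_1}-\Sigma_{\mathcal C_1}^{-1}\big)-\sum_{j\in\mathcal Q_1}\beta_j\big[I_{\mathcal S_j}-\Sigma_{\mathcal S_j}^{-1}\big]^{\mathcal C_1},$$ and, for $k=2,\dots,K$, $$J_k=\big(I_{\mathcal C_k}-\Sigma_{\mathcal C_k}^{-1}\big)-\sum_{j\in\mathcal Q_k}\beta_j\big[I_{\mathcal S_j}-\Sigma_{\mathcal S_j}^{-1}\big]^{\mathcal C_k}-\alpha_k\big[I_{\mathcal S_k}-\Sigma_{\mathcal S_k}^{-1}\big]^{\mathcal C_k}.$$ Define $$e_1=\ln\det\Sigma_{\mathcal C_1}-\sum_{j\in\mathcal Q_1}\beta_j\ln\det\Sigma_{\mathcal S_j},$$ and, for $k\ge2$, $$e_k=\ln\det\Sigma_{\mathcal C_k}-\sum_{j\in\mathcal Q_k}\beta_j\ln\det\Sigma_{\mathcal S_j}-\alpha_k\ln\det\Sigma_{\mathcal S_k}.$$ The local statistics are $L_k(x_{\mathcal C_k})=x_{\mathcal C_k}^TJ_kx_{\mathcal C_k}-e_k$. *)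

(* Defs.v *)
From HB Require Import structures.
From Stdlib Require Import Reals Lra ClassicalEpsilon FunctionalExtensionality PropExtensionality.
From mathcomp Require Import all_boot all_order all_algebra.
Set Implicit Arguments. Unset Strict Implicit. Unset Printing Implicit Defensive.

Definition Reqb (x y : R) : bool := if Req_EM_T x y then true else false.
Lemma Reqb_axiom : Equality.axiom Reqb.
Proof. move=> x y; rewrite /Reqb; case: Req_EM_T => h; [exact: ReflectT | exact: ReflectF]. Qed.
HB.instance Definition _ := hasDecEq.Build R Reqb_axiom.

Definition Rfind (P : pred R) (n : nat) : option R :=
  match excluded_middle_informative (exists x, P x) with
  | left h => Some (proj1_sig (constructive_indefinite_description _ h))
  | right _ => None
  end.
Lemma Rfind_correct P n x : Rfind P n = Some x -> P x.
Proof. rewrite /Rfind; case: excluded_middle_informative => // h [<-].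
by case: constructive_indefinite_description. Qed.
Lemma Rfind_complete (P : pred R) : (exists x, P x) -> exists n, Rfind P n.
Proof. move=> h; exists 0%N; rewrite /Rfind; by case: excluded_middle_informative. Qed.
Lemma Rfind_ext (P Q : pred R) : P =1 Q -> Rfind P =1 Rfind Q.
Proof. move=> h n; have -> : P = Q by apply: functional_extensionality. by []. Qed.
HB.instance Definition _ := hasChoice.Build R Rfind_correct Rfind_complete Rfind_ext.

Lemma RaddA : associative Rplus. Proof. move=> *; lra. Qed.
Lemma RaddC : commutative Rplus. Proof. move=> *; lra. Qed.
Lemma Radd0 : left_id R0 Rplus. Proof. move=> *; lra. Qed.
Lemma RaddN : left_inverse R0 Ropp Rplus. Proof. move=> *; lra. Qed.
HB.instance Definition _ := GRing.isZmodule.Build R RaddA RaddC Radd0 RaddN.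

Lemma RmulA : associative Rmult. Proof. move=> *; ring. Qed.
Lemma RmulC : commutative Rmult. Proof. move=> *; ring. Qed.
Lemma Rmul1 : left_id R1 Rmult. Proof. move=> *; ring. Qed.
Lemma RmulD : left_distributive Rmult Rplus. Proof. move=> *; ring. Qed.
Lemma R1n0 : R1 != R0 :> R. Proof. by apply/eqP; lra. Qed.
HB.instance Definition _ := GRing.Zmodule_isComNzRing.Build R RmulA RmulC Rmul1 RmulD R1n0.

Definition Rinvx (x : R) : R := if Reqb x R0 then R0 else Rinv x.
Local Open Scope ring_scope.
Lemma RmulV (x : R) : x != 0 -> Rinvx x * x = 1.
Proof. move=> h; rewrite /Rinvx (negbTE h : Reqb x R0 = false); apply: Rinv_l => e.
by move: h; rewrite e; move/eqP. Qed.
Lemma Rinv0x : Rinvx 0 = 0.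
Proof. by rewrite /Rinvx /Reqb; case: Req_EM_T. Qed.
HB.instance Definition _ := GRing.ComNzRing_isField.Build R RmulV Rinv0x.

Definition Rleb (x y : R) : bool := if Rle_dec x y then true else false.
Definition Rltb (x y : R) : bool := if Rlt_dec x y then true else false.

Lemma RlebP x y : reflect (Rle x y) (Rleb x y).
Proof. rewrite /Rleb; case: Rle_dec => h; [exact: ReflectT | exact: ReflectF]. Qed.
Lemma RltbP x y : reflect (Rlt x y) (Rltb x y).
Proof. rewrite /Rltb; case: Rlt_dec => h; [exact: ReflectT | exact: ReflectF]. Qed.

Local Open Scope ring_scope.
Lemma Rle0_add (x y : R) : Rleb 0 x -> Rleb 0 y -> Rleb 0 (x + y).
Proof. move=> /RlebP h1 /RlebP h2; apply/RlebP; rewrite /GRing.add /=; simpl in *. 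
change (Rle R0 (Rplus x y)); change (Rle R0 x) in h1; change (Rle R0 y) in h2; lra. Qed.
Lemma Rle0_mul (x y : R) : Rleb 0 x -> Rleb 0 y -> Rleb 0 (x * y).
Proof. move=> /RlebP h1 /RlebP h2; apply/RlebP.
change (Rle R0 (Rmult x y)); change (Rle R0 x) in h1; change (Rle R0 y) in h2; nra. Qed.
Lemma Rle0_anti (x : R) : Rleb 0 x -> Rleb x 0 -> x = 0.
Proof. move=> /RlebP h1 /RlebP h2; change (Rle R0 x) in h1; change (Rle x R0) in h2.
change (x = R0); lra. Qed.
Lemma Rsub_ge0 (x y : R) : Rleb 0 (y - x) = Rleb x y.
Proof.
by apply/RlebP/RlebP => h; change (Rle R0 (Rminus y x)) in h || change (Rle R0 (Rminus y x)); lra. Qed.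
Lemma Rle0_total (x : R) : Rleb 0 x || Rleb x 0.
Proof. case: (RlebP 0 x) => //= h; apply/RlebP; change (~ Rle R0 x) in h; change (Rle x R0); lra. Qed.
Lemma RnormN (x : R) : Rabs (- x) = Rabs x.
Proof. exact: Rabs_Ropp. Qed.
Lemma Rge0_norm (x : R) : Rleb 0 x -> Rabs x = x.
Proof. move=> /RlebP h; exact: Rabs_right (Rle_ge _ _ h). Qed.
Lemma Rlt_def (x y : R) : Rltb x y = (y != x) && Rleb x y.
Proof. apply/RltbP/andP.
- move=> h; split; [apply/eqP => e; rewrite e in h; lra | apply/RlebP; lra].
- by case=> /eqP h /RlebP h2; lra. Qed.
HB.instance Definition _ := Num.IntegralDomain_isLeReal.Build R
  Rle0_add Rle0_mul Rle0_anti Rsub_ge0 Rle0_total RnormN Rge0_norm Rlt_def.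


(* Graph / clique notions.  V = 'I_N (0-based copy of {1,..,N}); the graph   *)
(* is a symmetric irreflexive adjacency relation E on 'I_N.                  *)

Definition is_clique (N : nat) (E : rel 'I_N) (A : {set 'I_N}) : bool :=
  [forall u in A, forall v in A, (u != v) ==> E u v].

(* Cliques are indexed by nat, only C 1, ..., C K matter. *)
Definition hist (N : nat) (C : nat -> {set 'I_N}) (k : nat) : {set 'I_N} :=
  \bigcup_(1 <= j < k.+1) C j.

Definition sep (N : nat) (C : nat -> {set 'I_N}) (k : nat) : {set 'I_N} :=
  hist C k.-1 :&: C k.

(* q(k) = min { j in 1..K : S_k \subset C_j } (0 if no such j). *)
Definition qidx (N : nat) (C : nat -> {set 'I_N}) (K k : nat) : nat :=
  head 0%N [seq j <- iota 1 K | sep C k \subset C j].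

(* Sub-matrices / sub-vectors indexed by U (in the increasing enumeration    *)
(* of U), and zero padding [A]^W.                                            *)

Definition subm (N : nat) (U : {set 'I_N}) (A : 'M[R]_N) : 'M[R]_#|U| :=
  \matrix_(i, j) A (enum_val i) (enum_val j).

Definition subv (N : nat) (U : {set 'I_N}) (x : 'cV[R]_N) : 'cV[R]_#|U| :=
  \col_i x (enum_val i) ord0.

Arguments subm {N} U A.
Arguments subv {N} U x.

(* [A]^W : equals A on U x U, 0 elsewhere (A indexed by U, result by W). *)
Definition pad (N : nat) (U W : {set 'I_N}) (A : 'M[R]_#|U|) : 'M[R]_#|W| :=
  \matrix_(i, j)
    match [pick a : 'I_#|U| | enum_val a == enum_val i :> 'I_N],
          [pick b : 'I_#|U| | enum_val b == enum_val j :> 'I_N] with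
    | Some a, Some b => A a b
    | _, _ => 0
    end.

Arguments pad {N} U W A.

Definition Tstat (N : nat) (Sigma : 'M[R]_N) (x : 'cV[R]_N) : R :=
  (x^T *m x) ord0 ord0 - (x^T *m invmx Sigma *m x) ord0 ord0 - ln (\det Sigma).

Definition IminusInv (N : nat) (Sigma : 'M[R]_N) (U : {set 'I_N}) : 'M[R]_#|U| :=
  1%:M - invmx (subm U Sigma).
Arguments IminusInv {N} Sigma U.

Definition Jmat (N K : nat) (C : nat -> {set 'I_N}) (Sigma : 'M[R]_N)
    (alpha beta : nat -> R) (k : nat) : 'M[R]_#|C k| :=
  IminusInv Sigma (C k)
  - (\sum_(2 <= j < K.+1 | qidx C K j == k)
        beta j *: pad (sep C j) (C k) (IminusInv Sigma (sep C j)))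
  - (if (2 <= k)%N then alpha k *: pad (sep C k) (C k) (IminusInv Sigma (sep C k))
     else 0).

Definition econst (N K : nat) (C : nat -> {set 'I_N}) (Sigma : 'M[R]_N)
    (alpha beta : nat -> R) (k : nat) : R :=
  ln (\det (subm (C k) Sigma))
  - (\sum_(2 <= j < K.+1 | qidx C K j == k) beta j * ln (\det (subm (sep C j) Sigma)))
  - (if (2 <= k)%N then alpha k * ln (\det (subm (sep C k) Sigma)) else 0).

Definition Lstat (N K : nat) (C : nat -> {set 'I_N}) (Sigma : 'M[R]_N)
    (alpha beta : nat -> R) (k : nat) (x : 'cV[R]_N) : R :=
  let xC := subv (C k) x in
  (xC^T *m Jmat K C Sigma alpha beta k *m xC) ord0 ord0 - econst K C Sigma alpha beta k.

(* Main.v *)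
Require Import Defs.
From HB Require Import structures.
From Stdlib Require Import Reals.
From mathcomp Require Import all_boot all_order all_algebra.
From mathcomp Require Import ring lra zify.
From mathcomp Require Import fingroup perm.
Import Order.TTheory GRing.Theory Num.Theory.
Set Implicit Arguments. Unset Strict Implicit. Unset Printing Implicit Defensive.
Local Open Scope ring_scope.

Definition quad n (x : 'cV[R]_n) (M : 'M[R]_n) : R :=
  \sum_i \sum_j x i 0 * M i j * x j 0.

Lemma quadE n (x : 'cV[R]_n) M : (x^T *m M *m x) 0 0 = quad x M.
Proof.
rewrite mxE /quad exchange_big; apply: eq_bigr => j _.
rewrite mxE big_distrl; apply: eq_bigr => i _; by rewrite !mxE.
Qed.

Section Basic.
Variable N : nat.

Definition padN (U : {set 'I_N}) (B : 'M[R]_#|U|) : 'M[R]_N :=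
  \matrix_(i, j)
    match [pick a : 'I_#|U| | enum_val a == i],
          [pick b : 'I_#|U| | enum_val b == j] with
    | Some a, Some b => B a b
    | _, _ => 0
    end.
Arguments padN U B : clear implicits.


Lemma pick_ev (U : {set 'I_N}) (a : 'I_#|U|) :
  [pick b : 'I_#|U| | enum_val b == enum_val a] = Some a.
Proof.
case: pickP => [b /eqP /enum_val_inj -> //|/(_ a)]; by rewrite eqxx.
Qed.

Lemma pick_out (U : {set 'I_N}) i : i \notin U ->
  [pick b : 'I_#|U| | enum_val b == i] = None.
Proof.
move=> hi; case: pickP => // b /eqP e; move: hi; by rewrite -e enum_valP.
Qed.

Lemma in_ev (U : {set 'I_N}) i : i \in U -> exists a : 'I_#|U|, enum_val a = i.
Proof. move=> hi; exists (enum_rank_in hi i); exact: enum_rankK_in. Qed.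

Lemma padN_ev (U : {set 'I_N}) (B : 'M[R]_#|U|) a b : padN U B (enum_val a) (enum_val b) = B a b.
Proof. by rewrite mxE !pick_ev. Qed.

Lemma padN_out (U : {set 'I_N}) (B : 'M[R]_#|U|) i j : ~~ ((i \in U) && (j \in U)) -> padN U B i j = 0.
Proof.
rewrite negb_and mxE => /orP [h|h]; rewrite (pick_out h) //.
by case: (pickP (fun a : 'I_#|U| => enum_val a == i)).
Qed.

Lemma padNB (U : {set 'I_N}) (A B : 'M[R]_#|U|) : padN U (A - B) = padN U A - padN U B.
Proof.
apply/matrixP => i j; rewrite !mxE.
case: (pickP (fun a : 'I_#|U| => enum_val a == i)) => [a _|_];
case: (pickP (fun a : 'I_#|U| => enum_val a == j)) => [b _|_]; rewrite ?mxE ?subr0 //.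
Qed.

Lemma pad_padN (S C : {set 'I_N}) (A : 'M[R]_#|S|) :
  pad S C A = \matrix_(a, b) padN S A (enum_val a) (enum_val b).
Proof. by apply/matrixP => a b; rewrite !mxE. Qed.

Lemma quad_sub (U : {set 'I_N}) (x : 'cV[R]_N) (F : 'M[R]_N) :
  (forall i j, ~~ ((i \in U) && (j \in U)) -> F i j = 0) ->
  ((subv U x)^T *m (\matrix_(a, b) F (enum_val a) (enum_val b)) *m subv U x) 0 0
  = quad x F.
Proof.
move=> hF.
rewrite quadE /quad.
have -> : \sum_i (\sum_j x i 0 * F i j * x j 0) =
   \sum_(i in U) \sum_(j in U) x i 0 * F i j * x j 0.
  rewrite [RHS]big_mkcond /=; apply: eq_bigr => i _; case: ifP => hi.
    rewrite [RHS]big_mkcond /=; apply: eq_bigr => j _; case: ifP => hj //.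
    by rewrite hF ?hi ?hj // mulr0 mul0r.
  by apply: big1 => j _; rewrite hF ?hi // mulr0 mul0r.
rewrite [RHS]big_enum_val; apply: eq_bigr => a _.
rewrite [RHS]big_enum_val; apply: eq_bigr => b _.
by rewrite !mxE.
Qed.

Lemma qpadN (U : {set 'I_N}) (x : 'cV[R]_N) (B : 'M[R]_#|U|) :
  ((subv U x)^T *m B *m subv U x) 0 0 = quad x (padN U B).
Proof.
rewrite -(@quad_sub U); last exact: padN_out.
congr ((_ *m _ *m _) 0 0); apply/matrixP => a b; by rewrite mxE padN_ev.
Qed.

Lemma qpad (S C : {set 'I_N}) (x : 'cV[R]_N) (A : 'M[R]_#|S|) :
  S \subset C ->
  ((subv C x)^T *m pad S C A *m subv C x) 0 0 = quad x (padN S A).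
Proof.
move=> sSC; rewrite pad_padN quad_sub // => i j h; apply: padN_out.
apply: contra h => /andP [hi hj]; by rewrite !(subsetP sSC).
Qed.

Lemma quadB (x : 'cV[R]_N) (A B : 'M[R]_N) : quad x (A - B) = quad x A - quad x B.
Proof.
rewrite /quad -sumrB; apply: eq_bigr => i _; rewrite -sumrB; apply: eq_bigr => j _.
by rewrite !mxE; ring.
Qed.

Lemma quadD (x : 'cV[R]_N) (A B : 'M[R]_N) : quad x (A + B) = quad x A + quad x B.
Proof.
rewrite /quad -big_split; apply: eq_bigr => i _; rewrite -big_split; apply: eq_bigr => j _.
by rewrite !mxE /= mulrDr mulrDl.
Qed.

Lemma quad0 (x : 'cV[R]_N) : quad x 0 = 0.
Proof. by rewrite /quad big1 // => i _; rewrite big1 // => j _; rewrite mxE mulr0 mul0r. Qed.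

Lemma quadZ (x : 'cV[R]_N) c (A : 'M[R]_N) : quad x (c *: A) = c * quad x A.
Proof.
rewrite /quad mulr_sumr; apply: eq_bigr => i _; rewrite mulr_sumr; apply: eq_bigr => j _.
by rewrite mxE; ring.
Qed.

End Basic.
Arguments padN {N} U B.

Section Core.
Variable N : nat.
Variable Sigma : 'M[R]_N.
Hypothesis HSsym : Sigma^T = Sigma.
Hypothesis HSpd : forall y : 'cV[R]_N, y != 0 -> 0 < (y^T *m Sigma *m y) 0 0.

Definition supp (U : {set 'I_N}) (M : 'M[R]_N) :=
  forall i j, ~~ ((i \in U) && (j \in U)) -> M i j = 0.
Definition invOn (U : {set 'I_N}) (M : 'M[R]_N) :=
  supp U M /\ forall i j, i \in U -> j \in U -> \sum_l M i l * Sigma l j = (i == j)%:R.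
Definition Gm (U : {set 'I_N}) : 'M[R]_N := padN U (invmx (subm U Sigma)).

Lemma Ssym i j : Sigma i j = Sigma j i.
Proof. by rewrite -{1}HSsym mxE. Qed.

Lemma uniq_row (U : {set 'I_N}) (v : 'I_N -> R) :
  (forall l, l \notin U -> v l = 0) ->
  (forall j, j \in U -> \sum_l v l * Sigma l j = 0) -> forall l, v l = 0.
Proof.
move=> hs he.
pose y : 'cV[R]_N := \col_l v l.
have y0 : y = 0.
  apply/eqP; apply: contraT => hy; have := HSpd hy.
  rewrite quadE /quad exchange_big /= big1 ?ltxx // => j _.
  have -> : \sum_i y i 0 * Sigma i j * y j 0 = (\sum_i v i * Sigma i j) * v j.
    by rewrite big_distrl; apply: eq_bigr => i _; rewrite !mxE.
  case hj: (j \in U); first by rewrite he ?mul0r.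
  by rewrite hs ?hj ?mulr0.
move=> l; have : y l 0 = 0 by rewrite y0 mxE.
by rewrite mxE.
Qed.

Lemma invOn_uniq U G1 G2 : invOn U G1 -> invOn U G2 -> G1 = G2.
Proof.
move=> [s1 e1] [s2 e2]; apply/matrixP => i j.
case hi: (i \in U); last by rewrite s1 ?s2 // hi.
apply/eqP; rewrite -subr_eq0; apply/eqP; move: j.
apply: (@uniq_row U (fun l => G1 i l - G2 i l)).
  move=> l hl; rewrite s1; last by rewrite (negbTE hl) andbF.
  by rewrite s2 ?subr0 // (negbTE hl) andbF.
move=> j hj; rewrite (eq_bigr (fun l => G1 i l * Sigma l j - G2 i l * Sigma l j)).
  by rewrite sumrB e1 // e2 // subrr.
by move=> l _; rewrite mulrBl.
Qed.

Lemma lift_zero (U : {set 'I_N}) (v : 'rV[R]_#|U|) : v *m subm U Sigma = 0 -> v = 0.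
Proof.
move=> hv.
pose w l := match [pick a : 'I_#|U| | enum_val a == l] with Some a => v 0 a | None => 0 end.
have hw : forall l, w l = 0.
  apply: (@uniq_row U w).
    by move=> l hl; rewrite /w pick_out.
  move=> j hj; have [b <-] := in_ev hj.
  have -> : \sum_l w l * Sigma l (enum_val b) = \sum_(l in U) w l * Sigma l (enum_val b).
    rewrite [RHS]big_mkcond /=; apply: eq_bigr => l _; case: ifP => // hl.
    by rewrite /w pick_out ?hl // mul0r.
  rewrite big_enum_val /=.
  transitivity ((v *m subm U Sigma) 0 b); last by rewrite hv mxE.
  by rewrite mxE; apply: eq_bigr => a _; rewrite /w pick_ev !mxE.
apply/rowP => a; have := hw (enum_val a); by rewrite /w pick_ev mxE.
Qed.

Lemma sub_unit (U : {set 'I_N}) : subm U Sigma \in unitmx.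
Proof.
rewrite unitmxE unitfE; apply/negP => /det0P [v hv0 hv].
by move: hv0; rewrite (lift_zero hv) eqxx.
Qed.

Lemma Gm_invOn U : invOn U (Gm U).
Proof.
split; first by move=> i j; exact: padN_out.
move=> i j hi hj; have [c <-] := in_ev hi; have [d <-] := in_ev hj.
have -> : \sum_l Gm U (enum_val c) l * Sigma l (enum_val d)
   = \sum_(l in U) Gm U (enum_val c) l * Sigma l (enum_val d).
  rewrite [RHS]big_mkcond /=; apply: eq_bigr => l _; case: ifP => // hl.
  by rewrite /Gm padN_out ?hl ?andbF // mul0r.
rewrite big_enum_val /=.
transitivity ((invmx (subm U Sigma) *m subm U Sigma) c d); last first.
  by rewrite mulVmx ?sub_unit // mxE (inj_eq enum_val_inj).
by rewrite mxE; apply: eq_bigr => a _; rewrite /Gm padN_ev !mxE.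
Qed.

Lemma Gm_sym U i j : Gm U i j = Gm U j i.
Proof.
case hij: ((i \in U) && (j \in U)); last first.
  by rewrite /Gm !padN_out ?hij // andbC hij.
case/andP: hij => hi hj; have [c <-] := in_ev hi; have [d <-] := in_ev hj.
rewrite /Gm !padN_ev.
have e : subm U Sigma = (subm U Sigma)^T.
  by apply/matrixP => a b; rewrite !mxE Ssym.
by rewrite [in LHS]e -trmx_inv mxE.
Qed.

Lemma Sigma_unit : Sigma \in unitmx.
Proof.
rewrite unitmxE unitfE; apply/negP => /det0P [v hv0 hv].
have h : forall l, v 0 l = 0.
  apply: (@uniq_row setT (fun l => v 0 l)); first by move=> l; rewrite inE.
  move=> j _; transitivity ((v *m Sigma) 0 j); last by rewrite hv mxE.
  by rewrite mxE.
have v0 : v = 0 by apply/rowP => l; rewrite h mxE.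
by move: hv0; rewrite v0 eqxx.
Qed.

Lemma Gm_setT : Gm setT = invmx Sigma.
Proof.
apply: (@invOn_uniq setT); first exact: Gm_invOn.
split; first by move=> i j; rewrite !inE.
move=> i j _ _; transitivity ((invmx Sigma *m Sigma) i j); first by rewrite mxE.
by rewrite mulVmx ?Sigma_unit // mxE.
Qed.

Lemma invOn_eq (U : {set 'I_N}) (G : 'M[R]_N) (i j : 'I_N) : invOn U G -> i \in U -> j \in U ->
  \sum_l G i l * Sigma l j = (i == j)%:R.
Proof. by case=> _ h; apply: h. Qed.

Lemma Gm_eq (U : {set 'I_N}) (i j : 'I_N) : i \in U -> j \in U -> \sum_l Gm U i l * Sigma l j = (i == j)%:R.
Proof. exact: invOn_eq (Gm_invOn U). Qed.

Lemma Gm_out (U : {set 'I_N}) (i j : 'I_N) : ~~ ((i \in U) && (j \in U)) -> Gm U i j = 0.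
Proof. exact: padN_out. Qed.

Lemma Dec (H C : {set 'I_N}) :
  (forall i j, i \in H -> i \notin C -> j \in C -> j \notin H -> Gm (H :|: C) i j = 0) ->
  Gm (H :|: C) = Gm H + Gm C - Gm (H :&: C).
Proof.
move=> hz; set P := Gm (H :|: C); set M := Gm H + Gm C - Gm (H :&: C).
have Psym i j : P i j = P j i by apply: Gm_sym.
have ME i j : M i j = Gm H i j + Gm C i j - Gm (H :&: C) i j by rewrite !mxE.
have Msym i j : M i j = M j i by rewrite !ME (Gm_sym H) (Gm_sym C) (Gm_sym (H :&: C)).
have sumB (A B : 'I_N -> R) j : \sum_l (A l - B l) * Sigma l j =
   \sum_l A l * Sigma l j - \sum_l B l * Sigma l j.
  by rewrite -sumrB; apply: eq_bigr => l _; rewrite mulrBl.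
have stA i l : i \in H -> i \notin C -> P i l = Gm H i l.
  move=> hiH hiC; apply/eqP; rewrite -subr_eq0; apply/eqP; move: l.
  apply: (@uniq_row H (fun l => P i l - Gm H i l)).
    move=> l hl; rewrite (@Gm_out H i l); last by rewrite (negbTE hl) andbF.
    rewrite subr0; case hlC: (l \in C); first by rewrite hz.
    by rewrite /P Gm_out // !inE (negbTE hl) hlC andbF.
  by move=> j hj; rewrite sumB /P (@Gm_eq (H :|: C)) ?inE ?hiH ?hj // (@Gm_eq H) // subrr.
have stB i l : i \in C -> i \notin H -> P i l = Gm C i l.
  move=> hiC hiH; apply/eqP; rewrite -subr_eq0; apply/eqP; move: l.
  apply: (@uniq_row C (fun l => P i l - Gm C i l)).
    move=> l hl; rewrite (@Gm_out C i l); last by rewrite (negbTE hl) andbF.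
    rewrite subr0; case hlH: (l \in H); first by rewrite Psym hz.
    by rewrite /P Gm_out // !inE (negbTE hl) hlH andbF.
  by move=> j hj; rewrite sumB /P (@Gm_eq (H :|: C)) ?inE ?hiC ?hj ?orbT // (@Gm_eq C) // subrr.
have stC i l : i \notin H :&: C -> P i l = M i l.
  rewrite inE negb_and => hi; rewrite ME.
  case hiH: (i \in H); case hiC: (i \in C); rewrite ?hiH ?hiC //= in hi.
  - rewrite stA ?hiC // (@Gm_out C) ?hiC // (@Gm_out (H :&: C)) ?inE ?hiC ?andbF //.
    by rewrite addr0 subr0.
  - rewrite stB ?hiH // (@Gm_out H) ?hiH // (@Gm_out (H :&: C)) ?inE ?hiH //.
    by rewrite add0r subr0.
  - rewrite /P !Gm_out ?inE ?hiH ?hiC //; by rewrite addr0 subr0.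
apply/matrixP => i l.
case hi: (i \in H :&: C); last by rewrite stC ?hi.
apply/eqP; rewrite -subr_eq0; apply/eqP; move: l.
apply: (@uniq_row (H :&: C) (fun l => P i l - M i l)).
  by move=> l hl; rewrite Psym Msym stC // subrr.
move=> j hj; rewrite sumB.
have -> : \sum_l M i l * Sigma l j =
   \sum_l Gm H i l * Sigma l j + \sum_l Gm C i l * Sigma l j
   - \sum_l Gm (H :&: C) i l * Sigma l j.
  rewrite -big_split -sumrB /=; apply: eq_bigr => l _; rewrite ME; ring.
move: hi hj; rewrite !inE => /andP [hiH hiC] /andP [hjH hjC].
rewrite !Gm_eq ?inE ?hiH ?hiC ?hjH ?hjC //; ring.
Qed.

End Core.

Section Dets.
Variable N : nat.

Definition ext (U : {set 'I_N}) (M : 'M[R]_N) : 'M[R]_N :=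
  \matrix_(i, j) if (i \in U) && (j \in U) then M i j else (i == j)%:R.

Lemma extE (U : {set 'I_N}) (M : 'M[R]_N) i j :
  ext U M i j = if (i \in U) && (j \in U) then M i j else (i == j)%:R.
Proof. by rewrite mxE. Qed.

Lemma sum_delta (i : 'I_N) (f : 'I_N -> R) : \sum_l (i == l)%:R * f l = f i.
Proof.
rewrite (bigD1 i) //= eqxx mul1r big1 ?addr0 // => l hl.
by rewrite eq_sym (negbTE hl) mul0r.
Qed.

Lemma sum_delta_r (j : 'I_N) (f : 'I_N -> R) : \sum_l f l * (l == j)%:R = f j.
Proof.
rewrite (bigD1 j) //= eqxx mulr1 big1 ?addr0 // => l hl.
by rewrite (negbTE hl) mulr0.
Qed.

Lemma det_unipot (T : {set 'I_N}) (M : 'M[R]_N) :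
  \det (\matrix_(i, j) ((i == j)%:R + (if (i \notin T) && (j \in T) then M i j else 0)) : 'M[R]_N) = 1.
Proof.
rewrite /determinant (bigD1 (1%g : 'S_N)) //=.
rewrite [X in _ + X = _]big1.
  rewrite addr0 odd_perm1 expr0 mul1r big1 // => i _.
  by rewrite !mxE perm1 eqxx; case: (i \in T) => /=; rewrite addr0.
move=> s hs; apply/eqP; rewrite mulf_eq0; apply/orP; right.
have [i hi] : exists i, s i != i.
  apply/existsP; apply: contraT; rewrite negb_exists => /forallP h.
  have e : s = 1%g.
    by apply/permP => i; rewrite perm1; apply/eqP; have := h i; rewrite negbK.
  by move: hs; rewrite e eqxx.
have zero k : s k != k -> (k \in T) || (s k \notin T) ->
    (\matrix_(i, j) ((i == j)%:R + (if (i \notin T) && (j \in T) then M i j else 0)) : 'M[R]_N) k (s k) = 0.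
  move=> hk hT; rewrite mxE eq_sym (negbTE hk) add0r.
  by case/orP: hT => h; [rewrite h | rewrite (negbTE h) andbF].
rewrite prodf_seq_eq0; apply/hasP.
case hT: ((i \in T) || (s i \notin T)).
  by exists i; [rewrite mem_index_enum | rewrite /= zero].
exists (s i); first by rewrite mem_index_enum.
have hsi : s (s i) != s i by apply: contra hi => /eqP /perm_inj ->.
rewrite /= zero //; move/negbT: hT; rewrite negb_or negbK => /andP [_ ->].
by [].
Qed.

Lemma unitcol_det (T : {set 'I_N}) (M : 'M[R]_N) :
  (forall i j, j \notin T -> M i j = (i == j)%:R) -> \det M = \det (ext T M).
Proof.
move=> hM.
pose L : 'M[R]_N := \matrix_(i, j) ((i == j)%:R + (if (i \notin T) && (j \in T) then M i j else 0)).
have eM : M = ext T M *m L.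
  apply/matrixP => i j; rewrite !mxE.
  rewrite (eq_bigr (fun l => ext T M i l * (l == j)%:R +
     ext T M i l * (if (l \notin T) && (j \in T) then M l j else 0))); last first.
    by move=> l _; rewrite !mxE mulrDr.
  rewrite big_split /= sum_delta_r.
  case hj: (j \in T); last first.
    rewrite big1 ?addr0; last by move=> l _; rewrite andbF mulr0.
    by rewrite hM ?hj // mxE hj andbF.
  have -> : \sum_l ext T M i l * (if (l \notin T) && true then M l j else 0)
      = (if i \in T then 0 else M i j).
    case hi: (i \in T).
      by rewrite big1 // => l _; rewrite mxE hi; case hl: (l \in T) => /=; rewrite ?mulr0 // eq_sym; case: (l =P i) => [e|]; [rewrite e hi in hl | rewrite mul0r].
    rewrite (bigD1 i) //= big1 ?addr0.
      by rewrite mxE hi /= eqxx mul1r.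
    move=> l hl; rewrite mxE hi /= eq_sym (negbTE hl) mul0r //.
  rewrite mxE hj; case hi: (i \in T) => /=; first by rewrite addr0.
  case: (i =P j) => [e|_]; [by rewrite e hj in hi | by rewrite add0r].
by rewrite {1}eM det_mulmx det_unipot mulr1.
Qed.

Lemma ext_setT (M : 'M[R]_N) : ext setT M = M.
Proof. by apply/matrixP => i j; rewrite mxE !inE. Qed.

Lemma ext_set0 (M : 'M[R]_N) : ext set0 M = 1%:M.
Proof. by apply/matrixP => i j; rewrite !mxE !inE. Qed.

Lemma det_ext1 (v : 'I_N) (G : 'M[R]_N) : \det (ext [set v] G) = G v v.
Proof.
have -> : ext [set v] G = diag_mx (\row_i (if i == v then G v v else 1)).
  apply/matrixP => i j; rewrite !mxE !inE.
  case: (i =P j) => [<-|hij] /=; first by case: (i =P v) => [->|]; rewrite ?eqxx ?andbb //= mulr1n.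
  rewrite mulr0n; case: (i =P v) => [ei|]; case: (j =P v) => [ej|] //=.
  by case: hij; rewrite ei ej.
rewrite det_diag (bigD1 v) //= big1 ?mulr1; first by rewrite mxE eqxx.
by move=> i hi; rewrite mxE (negbTE hi).
Qed.

Variable Sigma : 'M[R]_N.
Hypothesis HSsym : Sigma^T = Sigma.
Hypothesis HSpd : forall y : 'cV[R]_N, y != 0 -> 0 < (y^T *m Sigma *m y) 0 0.

Lemma ext_inv (W : {set 'I_N}) : ext W Sigma *m ext W (Gm Sigma W) = 1%:M.
Proof.
apply: mulmx1C; apply/matrixP => i j; rewrite !mxE.
case hi: (i \in W); last first.
  rewrite (eq_bigr (fun l => (i == l)%:R * ext W Sigma l j)).
    by rewrite sum_delta mxE hi.
  by move=> l _; rewrite mxE hi.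
case hj: (j \in W); last first.
  rewrite (eq_bigr (fun l => ext W (Gm Sigma W) i l * (l == j)%:R)).
    by rewrite sum_delta_r mxE hi hj /=; case: (i =P j) => // e; rewrite e hj in hi.
  by move=> l _; rewrite [ext W Sigma l j]mxE hj andbF.
rewrite -(Gm_eq HSpd hi hj); apply: eq_bigr => l _; rewrite !extE hi hj /=.
case hl: (l \in W) => //=.
rewrite Gm_out ?hl ?andbF // mul0r; case: (i =P l) => [e|]; last by rewrite mul0r.
by rewrite e hl in hi.
Qed.

Lemma jacobi (W Y : {set 'I_N}) : Y \subset W ->
  \det (ext W Sigma) * \det (ext Y (Gm Sigma W)) = \det (ext (W :\: Y) Sigma).
Proof.
move=> sYW.
set A := ext W Sigma; set Pe := ext W (Gm Sigma W).
pose Z : 'M[R]_N := \matrix_(i, j) if j \in Y then Pe i j else (i == j)%:R.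
pose Rm : 'M[R]_N := \matrix_(i, j) if j \in Y then (i == j)%:R else A i j.
have AZ : A *m Z = Rm.
  apply/matrixP => i j; rewrite [Rm i j]mxE [LHS]mxE; case hj: (j \in Y).
    transitivity ((A *m Pe) i j); last by rewrite ext_inv mxE.
    by rewrite [RHS]mxE; apply: eq_bigr => l _; rewrite [Z l j]mxE hj.
  rewrite -[RHS](sum_delta_r j (fun l => A i l)); apply: eq_bigr => l _.
  by rewrite [Z l j]mxE hj.
have dZ : \det Z = \det (ext Y (Gm Sigma W)).
  rewrite (@unitcol_det Y); last by move=> i j hj; rewrite [Z i j]mxE (negbTE hj).
  congr (\det _); apply/matrixP => i j; rewrite !extE [Z i j]mxE.
  case hij: ((i \in Y) && (j \in Y)) => //; case/andP: hij => hi hj.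
  by rewrite hj /Pe extE !(subsetP sYW).
have dR : \det Rm = \det (ext (W :\: Y) Sigma).
  rewrite (@unitcol_det (~: Y)); last by move=> i j; rewrite inE negbK [Rm i j]mxE => ->.
  congr (\det _); apply/matrixP => i j; rewrite !extE [Rm i j]mxE !inE.
  case: (i \in Y); case: (j \in Y) => //=; rewrite ?andbF //.
  by rewrite /A extE.
by rewrite -dZ -dR -AZ det_mulmx.
Qed.

Lemma Gm_pos (U : {set 'I_N}) v : v \in U -> 0 < Gm Sigma U v v.
Proof.
move=> hv; set G := Gm Sigma U.
pose y : 'cV[R]_N := \col_l G l v.
have yE l : y l 0 = G l v by rewrite mxE.
have ytE l : y^T 0 l = G l v by rewrite mxE yE.
have eq : (y^T *m Sigma *m y) 0 0 = G v v.
  rewrite quadE /quad exchange_big /=.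
  rewrite (eq_bigr (fun j => (\sum_i G v i * Sigma i j) * G j v)); last first.
    move=> j _; rewrite big_distrl; apply: eq_bigr => i _.
    by rewrite !yE (Gm_sym HSsym).
  rewrite (eq_bigr (fun j => (v == j)%:R * G j v)); first by rewrite sum_delta.
  move=> j _; case hj: (j \in U); first by rewrite Gm_eq.
  by rewrite /G (@Gm_out _ Sigma U j v) ?hj // !mulr0.
rewrite -eq; apply: HSpd; apply/eqP => y0.
have h1 := Gm_eq HSpd hv hv; rewrite eqxx in h1.
have h0 : \sum_l Gm Sigma U v l * Sigma l v = 0.
  apply: big1 => l _; have : y l 0 = 0 by rewrite y0 mxE.
  by rewrite yE (Gm_sym HSsym) => ->; rewrite mul0r.
by move: h1; rewrite h0 => /eqP; rewrite eq_sym oner_eq0.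
Qed.

Lemma det_pos (U : {set 'I_N}) : 0 < \det (ext U Sigma).
Proof.
move: {2}#|U| (erefl #|U|) => n; elim: n U => [|n IH] U hU.
  by move: hU => /eqP; rewrite cards_eq0 => /eqP ->; rewrite ext_set0 det1 ltr01.
have [v hv] : exists v, v \in U.
  by apply/set0Pn; rewrite -card_gt0 hU.
have := jacobi (Y := [set v]) (W := U); rewrite sub1set => /(_ hv).
rewrite det_ext1 => e.
have : 0 < \det (ext (U :\: [set v]) Sigma).
  by apply: IH; move: hU; rewrite (cardsD1 v U) hv add1n => -[].
rewrite -e pmulr_lgt0 //; exact: Gm_pos.
Qed.

End Dets.

Lemma reindex_det n m (e : n = m) (f : 'I_n -> 'I_m) (A : 'M[R]_m) :
  injective f -> \det (\matrix_(i, j) A (f i) (f j) : 'M[R]_n) = \det A.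
Proof.
case: m / e in f A * => finj.
pose s := perm finj.
have -> : (\matrix_(i, j) A (f i) (f j) : 'M[R]_n) = row_perm s (col_perm s A).
  by apply/matrixP => i j; rewrite !mxE !permE.
rewrite row_permE col_permE !det_mulmx !det_perm odd_permV.
by case: (odd_perm s); rewrite /= ?expr0 ?expr1 ?mul1r ?mulr1 // mulrN1 mulN1r opprK.

Qed.

Section DetSub.
Variable N : nat.

Lemma det_ext_sub (U : {set 'I_N}) (M : 'M[R]_N) : \det (ext U M) = \det (subm U M).
Proof.
have e : (#|U| + #|~: U| = N)%N by rewrite cardsC card_ord.
pose f (k : 'I_(#|U| + #|~: U|)) : 'I_N :=
  match split k with inl i => enum_val i | inr j => enum_val j end.
have fL i : f (lshift _ i) = enum_val i.
  by rewrite /f (unsplitK (inl _ i)).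
have fR j : f (rshift _ j) = enum_val j.
  by rewrite /f (unsplitK (inr _ j)).
have finj : injective f.
  move=> k1 k2; case: (split_ordP k1) => [i1 ->|j1 ->]; case: (split_ordP k2) => [i2 ->|j2 ->];
    rewrite ?fL ?fR.
  - by move/enum_val_inj ->.
  - by move=> h; have := enum_valP i1; have := enum_valP j2; rewrite -h inE => /negP.
  - by move=> h; have := enum_valP i2; have := enum_valP j1; rewrite h inE => /negP.
  - by move/enum_val_inj ->.
rewrite -(reindex_det e (ext U M) finj).
have -> : (\matrix_(i, j) ext U M (f i) (f j) : 'M[R]_(#|U| + #|~: U|))
   = block_mx (subm U M) 0 0 1%:M.
  apply/matrixP => k1 k2.
  case: (split_ordP k1) => [i1 ->|j1 ->]; case: (split_ordP k2) => [i2 ->|j2 ->];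
    rewrite ?block_mxEul ?block_mxEur ?block_mxEdl ?block_mxEdr mxE ?fL ?fR extE.
  - by rewrite !enum_valP mxE.
  - have := enum_valP j2; rewrite inE => /negbTE ->; rewrite andbF mxE.
    case: eqP => // h; have := enum_valP i1; rewrite h.
    by have := enum_valP j2; rewrite inE => /negP.
  - have := enum_valP j1; rewrite inE => /negbTE ->; rewrite mxE.
    case: eqP => // h; have := enum_valP i2; rewrite -h.
    by have := enum_valP j1; rewrite inE => /negP.
  - have := enum_valP j1; rewrite inE => /negbTE ->; rewrite !mxE.
    by rewrite (inj_eq enum_val_inj).
by rewrite det_ublock det1 mulr1.
Qed.

Variable Sigma : 'M[R]_N.
Hypothesis HSsym : Sigma^T = Sigma.
Hypothesis HSpd : forall y : 'cV[R]_N, y != 0 -> 0 < (y^T *m Sigma *m y) 0 0.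

Lemma DetDec (H C : {set 'I_N}) :
  (forall i j, i \in H -> i \notin C -> j \in C -> j \notin H -> Gm Sigma (H :|: C) i j = 0) ->
  \det (ext (H :|: C) Sigma) * \det (ext (H :&: C) Sigma)
  = \det (ext H Sigma) * \det (ext C Sigma).
Proof.
move=> hz.
have j1 := jacobi HSpd (W := H :|: C) (Y := C :\: H).
have j2 := jacobi HSpd (W := C) (Y := C :\: H).
have e1 : (H :|: C) :\: (C :\: H) = H.
  by apply/setP => i; rewrite !inE; case: (i \in H); case: (i \in C).
have e2 : C :\: (C :\: H) = H :&: C.
  by apply/setP => i; rewrite !inE; case: (i \in H); case: (i \in C).
rewrite e1 in j1; rewrite e2 in j2.
have s1 : C :\: H \subset H :|: C.
  by apply/subsetP => i; rewrite !inE => /andP [_ ->]; rewrite orbT.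
have s2 : C :\: H \subset C by apply: subsetDl.
have d : ext (C :\: H) (Gm Sigma (H :|: C)) = ext (C :\: H) (Gm Sigma C).
  apply/matrixP => i j; rewrite !extE.
  case hij: ((i \in C :\: H) && (j \in C :\: H)) => //.
  move: hij; rewrite !inE => /andP [/andP [hiH _] _].
  have mE (A B D : 'M[R]_N) : (A + B - D) i j = A i j + B i j - D i j by rewrite !mxE.
  rewrite (Dec HSsym HSpd hz) mE (Gm_out Sigma (U := H)) ?(negbTE hiH) //.
  by rewrite (Gm_out Sigma (U := H :&: C)) ?inE ?(negbTE hiH) // add0r subr0.
rewrite -(j1 s1) -(j2 s2) d; ring.
Qed.

End DetSub.

Section Graph.
Variables (N K : nat) (E : rel 'I_N) (C : nat -> {set 'I_N}).
Hypotheses (HEsym : symmetric E) (HEirr : irreflexive E).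
Hypothesis Hall : forall A, maxset (is_clique E) A -> exists2 k, (1 <= k <= K)%N & C k = A.
Hypothesis Hperf : forall k, (2 <= k <= K)%N -> exists2 j, (1 <= j < k)%N & sep C k \subset C j.

Lemma mem_bigU (r : seq nat) (F : nat -> {set 'I_N}) x :
  (x \in \bigcup_(i <- r) F i) = has (fun i => x \in F i) r.
Proof. by elim: r => [|a r IH]; rewrite ?big_nil ?big_cons ?inE //= IH. Qed.

Lemma hist0 : hist C 0 = set0.
Proof. by rewrite /hist big_geq. Qed.

Lemma histS k : (1 <= k)%N -> hist C k = hist C k.-1 :|: C k.
Proof. by case: k => // k _; rewrite /hist big_nat_recr. Qed.

Lemma hist1 : hist C 1 = C 1.
Proof. by rewrite histS // hist0 set0U. Qed.

Lemma sub_hist m k : (1 <= m <= k)%N -> C m \subset hist C k.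
Proof.
move=> /andP [h1 h2]; apply/subsetP => i hi; rewrite /hist mem_bigU; apply/hasP; exists m => //.
by rewrite mem_index_iota h1 ltnS.
Qed.

Lemma in_hist i k : i \in hist C k -> exists2 m, (1 <= m <= k)%N & i \in C m.
Proof.
rewrite /hist mem_bigU => /hasP [m]; rewrite mem_index_iota ltnS => hm hi; by exists m.
Qed.

Lemma clique_in i j : (i == j) || E i j -> exists2 m, (1 <= m <= K)%N & (i \in C m) && (j \in C m).
Proof.
move=> hij.
have cl : is_clique E [set i; j].
  apply/forallP => u; apply/implyP; rewrite !inE => hu.
  apply/forallP => v; apply/implyP; rewrite !inE => hv; apply/implyP => huv.
  case/orP: hij => [/eqP eij|eij].
    by move: hu hv huv; rewrite -eij !orbb => /eqP -> /eqP ->; rewrite eqxx.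
  move: huv; case/orP: hu => /eqP ->; case/orP: hv => /eqP ->; rewrite ?eqxx //= => _.
  by rewrite HEsym.
have [A mA sA] := maxset_exists cl.
have [k hk eA] := Hall mA.
exists k => //; rewrite eA !(subsetP sA) // !inE eqxx ?orbT //.
Qed.

Lemma histK : (1 <= K)%N -> hist C K = setT.
Proof.
move=> _; apply/setP => i; rewrite inE.
have hii : (i == i) || E i i by rewrite eqxx.
have [m hm /andP [hi _]] := clique_in hii.
exact: (subsetP (sub_hist hm)).
Qed.

Lemma K_pos : (1 <= K)%N.
Proof.
have cl : is_clique E set0 by apply/forallP => u; rewrite inE.
have [A mA _] := maxset_exists cl.
by have [k /andP [h1 h2] _] := Hall mA; apply: leq_trans h2.
Qed.

Lemma qidx_spec j : (2 <= j <= K)%N ->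
  (1 <= qidx C K j <= K)%N /\ sep C j \subset C (qidx C K j).
Proof.
move=> hj; have [j' hj' sj'] := Hperf hj.
rewrite /qidx.
have hin : j' \in [seq j0 <- iota 1 K | sep C j \subset C j0].
  rewrite mem_filter sj' mem_iota /=; move: hj hj' => /andP [_ hK] /andP [h1 h2].
  by rewrite h1 /= add1n ltnS (leq_trans (ltnW h2) hK).
case e: [seq j0 <- iota 1 K | sep C j \subset C j0] => [|a l]; first by rewrite e in hin.
have : a \in [seq j0 <- iota 1 K | sep C j \subset C j0] by rewrite e mem_head.
rewrite mem_filter mem_iota add1n ltnS /= => /andP [sa ha]; split => //.
Qed.

End Graph.

Lemma ln_mulR (x y : R) : (0 < x)%R -> (0 < y)%R -> ln (x * y) = ln x + ln y.
Proof. move=> /RltbP hx /RltbP hy. exact: ln_mult. Qed.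

Lemma zmod6 (V : zmodType) (a b c x y z : V) :
  a + b - c - (x + y - z) = (a - x) + (b - y) - (c - z).
Proof.
rewrite opprB opprB [a - x + _]addrACA -opprD addrACA [RHS]addrACA.
by rewrite [X in _ + X = _]addrC.
Qed.

Lemma RminusE (a b : R) : Rminus a b = a - b.
Proof. by []. Qed.

Section Main.
Variables (N K : nat) (E : rel 'I_N) (C : nat -> {set 'I_N}) (Sigma : 'M[R]_N).
Hypotheses (HEsym : symmetric E) (HEirr : irreflexive E).
Hypothesis Hall : forall A, maxset (is_clique E) A -> exists2 k, (1 <= k <= K)%N & C k = A.
Hypothesis Hperf : forall k, (2 <= k <= K)%N -> exists2 j, (1 <= j < k)%N & sep C k \subset C j.
Hypothesis HSsym : Sigma^T = Sigma.
Hypothesis HSpd : forall y : 'cV[R]_N, y != 0 -> 0 < (y^T *m Sigma *m y) 0 0.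
Hypothesis HSmarkov : forall i j : 'I_N, i != j -> ~~ E i j -> invmx Sigma i j = 0.

Definition Km (U : {set 'I_N}) : 'M[R]_N := padN U (IminusInv Sigma U).
Definition Dm (U : {set 'I_N}) : 'M[R]_N := \matrix_(i, j) ((i == j) && (i \in U))%:R.

Lemma Km_eq U : Km U = Dm U - Gm Sigma U.
Proof.
rewrite /Km /IminusInv padNB; congr (_ - _).
apply/matrixP => i j; rewrite [RHS]mxE.
case hij: ((i \in U) && (j \in U)); last first.
  rewrite padN_out ?hij //; case: (i =P j) => [e|] //=.
  by move: hij; rewrite e andbb => ->.
case/andP: hij => hi hj; have [a <-] := in_ev hi; have [b <-] := in_ev hj.
by rewrite padN_ev mxE (inj_eq enum_val_inj) enum_valP andbT.
Qed.

Lemma Dm_dec H D : Dm (H :|: D) = Dm H + Dm D - Dm (H :&: D).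
Proof.
apply/matrixP => i j; rewrite !mxE !inE.
case: (i == j); case: (i \in H); case: (i \in D); rewrite /= ?addr0 ?subr0 ?add0r ?subrr //.
by rewrite addrK.
Qed.

Definition Supp k := forall i j, Gm Sigma (hist C k) i j != 0 ->
  exists2 m, (1 <= m <= k)%N & (i \in C m) && (j \in C m).

Definition Zhyp k := forall i j, i \in hist C k.-1 -> i \notin C k -> j \in C k ->
  j \notin hist C k.-1 -> Gm Sigma (hist C k.-1 :|: C k) i j = 0.

Lemma supp_K : Supp K.
Proof.
move=> i j; rewrite (histK HEsym Hall (K_pos Hall)) Gm_setT // => hij.
apply: (clique_in HEsym Hall); case: (i =P j) => //= /eqP hne.
by apply: contraT => hE; move: hij; rewrite HSmarkov ?eqxx.
Qed.

Lemma step k : (2 <= k <= K)%N -> Supp k -> Zhyp k /\ Supp k.-1.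
Proof.
move=> hk hS.
have hk1 : (1 <= k)%N by case/andP: hk => /ltnW.
have eH : hist C k = hist C k.-1 :|: C k by rewrite histS.
have hz : Zhyp k.
  move=> i j hi hiC hj hjH; rewrite -eH; apply/eqP; apply: contraT => /hS [m hm /andP [him hjm]].
  case: (m =P k) => [e|ne]; first by rewrite -e him in hiC.
  have : (1 <= m <= k.-1)%N.
    case/andP: hm => -> h2 /=; rewrite -ltnS prednK // ltn_neqAle h2 andbT.
    by apply/eqP.
  by move=> /(sub_hist C) /subsetP /(_ j hjm); rewrite (negbTE hjH).
split=> // i j hij.
have hD := Dec HSsym HSpd hz; rewrite -eH in hD.
case hij2: ((i \in C k) && (j \in C k)).
  case/andP: hij2 => hiC hjC.
  have hH : (i \in hist C k.-1) && (j \in hist C k.-1).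
    by apply: contraNT hij => h; rewrite Gm_out.
  case/andP: hH => hiH hjH.
  have [q hq sq] := Hperf hk.
  exists q; first by case/andP: hq => -> h2 /=; rewrite -ltnS prednK.
  by rewrite !(subsetP sq) // /sep inE ?hiH ?hjH.
have e : Gm Sigma (hist C k.-1) i j = Gm Sigma (hist C k) i j.
  rewrite hD.
  have mE (A B D : 'M[R]_N) : (A + B - D) i j = A i j + B i j - D i j by rewrite !mxE.
  rewrite mE (@Gm_out _ Sigma (C k)) ?hij2 // (@Gm_out _ Sigma (hist C k.-1 :&: C k)).
    by rewrite addr0 subr0.
  by rewrite !inE; apply: contraFN hij2 => /andP [/andP [_ ->] /andP [_ ->]].
rewrite e in hij; have [m hm /andP [him hjm]] := hS _ _ hij.
exists m; last by rewrite him hjm.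
case/andP: hm => -> /=; rewrite leq_eqVlt; case/orP => [/eqP em|].
  by move: hij2; rewrite -em him hjm.
by move=> h; rewrite -ltnS prednK.
Qed.

Lemma supp_all k : (1 <= k <= K)%N -> Supp k.
Proof.
move=> /andP [h1 h2].
have e : k = (K - (K - k))%N by lia.
have hlt : (K - k < K)%N by lia.
rewrite e; move: (K - k)%N hlt => d; clear e h1 h2.
elim: d => [|d IH] hd; first by rewrite subn0; exact: supp_K.
have hd' : (d < K)%N by lia.
have := IH hd' => hS.
have hk : (2 <= K - d <= K)%N.
  by apply/andP; split; lia.
have := (step hk hS).2.
by have -> : (K - d.+1 = (K - d).-1)%N by lia.
Qed.

Lemma zhyp_all k : (2 <= k <= K)%N -> Zhyp k.
Proof.
move=> hk; apply: (step hk _).1; apply: supp_all.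
by case/andP: hk => h1 ->; rewrite (ltnW h1).
Qed.

Lemma Km_dec k : (2 <= k <= K)%N ->
  Km (hist C k) = Km (hist C k.-1) + Km (C k) - Km (sep C k).
Proof.
move=> hk; have hk1 : (1 <= k)%N by case/andP: hk => /ltnW.
rewrite histS // !Km_eq Dm_dec (Dec HSsym HSpd (zhyp_all hk)) /sep.
exact: zmod6.
Qed.

Lemma Km_hist k : (1 <= k <= K)%N ->
  Km (hist C k) = \sum_(1 <= m < k.+1) Km (C m) - \sum_(2 <= m < k.+1) Km (sep C m).
Proof.
elim: k => // k IH /andP [_ hk].
case: k IH hk => [|k] IH hk.
  by rewrite hist1 big_nat1 big_geq // subr0.
have hk2 : (2 <= k.+2 <= K)%N by rewrite hk.
rewrite (Km_dec hk2) /= IH ?(ltnW hk) //.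
rewrite [X in _ = X - _]big_nat_recr // [X in _ = _ - X]big_nat_recr //=.
by rewrite -addrA addrACA opprD.
Qed.

Definition ld (U : {set 'I_N}) : R := ln (\det (ext U Sigma)).

Lemma ld_dec k : (2 <= k <= K)%N ->
  ld (hist C k) = ld (hist C k.-1) + ld (C k) - ld (sep C k).
Proof.
move=> hk; have hk1 : (1 <= k)%N by case/andP: hk => /ltnW.
have hD := DetDec HSsym HSpd (zhyp_all hk).
rewrite -histS // in hD.
have pos U : (0 < \det (ext U Sigma))%R by apply: det_pos.
have := congr1 ln hD; rewrite !ln_mulR // /ld /sep => h.
by rewrite -h addrK.
Qed.

Lemma ld_hist k : (1 <= k <= K)%N ->
  ld (hist C k) = \sum_(1 <= m < k.+1) ld (C m) - \sum_(2 <= m < k.+1) ld (sep C m).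
Proof.
elim: k => // k IH /andP [_ hk].
case: k IH hk => [|k] IH hk.
  by rewrite hist1 big_nat1 big_geq // subr0.
have hk2 : (2 <= k.+2 <= K)%N by rewrite hk.
rewrite (ld_dec hk2) /= IH ?(ltnW hk) //.
rewrite [X in _ = X - _]big_nat_recr // [X in _ = _ - X]big_nat_recr //=.
by rewrite -addrA addrACA opprD.
Qed.

Variables (alpha beta : nat -> R) (x : 'cV[R]_N).
Hypothesis Hab : forall k, (2 <= k <= K)%N -> alpha k + beta k = 1.

Definition fC m := quad x (Km (C m)) - ld (C m).
Definition gS j := quad x (Km (sep C j)) - ld (sep C j).

Lemma quad_sum n (v : 'cV[R]_n) (I : Type) (r : seq I) (P : pred I) (F : I -> 'M[R]_n) :
  quad v (\sum_(i <- r | P i) F i) = \sum_(i <- r | P i) quad v (F i).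
Proof. exact: (big_morph (quad v) (quadD v) (quad0 v)). Qed.

Lemma qK (S U : {set 'I_N}) : S \subset U ->
  quad (subv U x) (pad S U (IminusInv Sigma S)) = quad x (Km S).
Proof. by move=> sSU; rewrite -quadE qpad. Qed.

Lemma Lstat_eq k : (1 <= k <= K)%N ->
  Lstat K C Sigma alpha beta k x =
  fC k - \sum_(2 <= j < K.+1 | qidx C K j == k) beta j * gS j
  - (if (2 <= k)%N then alpha k * gS k else 0).
Proof.
move=> hk.
rewrite /Lstat /Jmat /econst /= quadE quadB quadB quad_sum.
rewrite -quadE qpadN -/(Km (C k)).
have e1 : \sum_(2 <= j < K.+1 | qidx C K j == k)
      quad (subv (C k) x) (beta j *: pad (sep C j) (C k) (IminusInv Sigma (sep C j)))
    = \sum_(2 <= j < K.+1 | qidx C K j == k) beta j * quad x (Km (sep C j)).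
  rewrite big_nat_cond [RHS]big_nat_cond; apply: eq_bigr => j /andP [hj /eqP hq].
  rewrite quadZ qK //; have [_ ] := qidx_spec Hperf hj; by rewrite hq.
have e2 : quad (subv (C k) x)
     (if (2 <= k)%N then alpha k *: pad (sep C k) (C k) (IminusInv Sigma (sep C k)) else 0)
   = if (2 <= k)%N then alpha k * quad x (Km (sep C k)) else 0.
  case: ifP => _; last by rewrite quad0.
  by rewrite quadZ qK // /sep subsetIr.
rewrite e1 e2 -!det_ext_sub /fC /gS -/(ld (C k)) -/(ld (sep C k)).
have e3 : \sum_(2 <= j < K.+1 | qidx C K j == k) beta j * ln (\det (subm (sep C j) Sigma))
   = \sum_(2 <= j < K.+1 | qidx C K j == k) beta j * ld (sep C j).
  by apply: eq_bigr => j _; rewrite /ld det_ext_sub.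
rewrite e3.
have e4 : \sum_(2 <= j < K.+1 | qidx C K j == k) beta j * (quad x (Km (sep C j)) - ld (sep C j))
   = \sum_(2 <= j < K.+1 | qidx C K j == k) beta j * quad x (Km (sep C j))
     - \sum_(2 <= j < K.+1 | qidx C K j == k) beta j * ld (sep C j).
  by rewrite -sumrB; apply: eq_bigr => j _; rewrite mulrBr.
rewrite e4; case: ifP => _;
  move: (quad x _) (ld _) (\sum_(_ <= _ < _ | _) _) (\sum_(_ <= _ < _ | _) _) => a b c d.
  all: by rewrite !RminusE; ring.
Qed.

Lemma exch (F : nat -> R) :
  \sum_(1 <= k < K.+1) \sum_(2 <= j < K.+1 | qidx C K j == k) F j = \sum_(2 <= j < K.+1) F j.
Proof.
rewrite (eq_bigr (fun k => \sum_(2 <= j < K.+1) (if qidx C K j == k then F j else 0)));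
  last by move=> k _; rewrite big_mkcond.
rewrite exchange_big /=; apply: eq_big_nat => j hj.
have [hq _] := qidx_spec Hperf hj.
rewrite (bigD1_seq (qidx C K j)) ?iota_uniq //=; last by rewrite mem_index_iota ltnS.
rewrite eqxx big1 ?addr0 // => k hk; by rewrite eq_sym (negbTE hk).
Qed.

Lemma alpha_sum (F : nat -> R) :
  \sum_(1 <= k < K.+1) (if (2 <= k)%N then F k else 0) = \sum_(2 <= k < K.+1) F k.
Proof.
have K1 := K_pos Hall.
rewrite (@big_cat_nat _ _ _ 2) //= ?ltnS // big_nat1 /= add0r.
by apply: eq_big_nat => k /andP [-> _].
Qed.

Lemma final :
  Tstat Sigma x = \sum_(1 <= k < K.+1) Lstat K C Sigma alpha beta k x.
Proof.
have K1 := K_pos Hall.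
rewrite (@eq_big_nat _ _ _ 1 K.+1 _ _ (fun k (hk : (1 <= k < K.+1)%N) => Lstat_eq hk)).
rewrite !sumrB exch alpha_sum.
have eT : Tstat Sigma x = quad x (Km (hist C K)) - ld (hist C K).
  rewrite /Tstat (histK HEsym Hall K1) /ld ext_setT Km_eq Gm_setT // quadB.
  rewrite !quadE.
  have -> : Dm setT = 1%:M by apply/matrixP => i j; rewrite !mxE inE andbT.
  by rewrite -[quad x 1%:M]quadE mulmx1.
rewrite eT Km_hist ?K1 ?leqnn // ld_hist ?K1 ?leqnn // quadB !quad_sum.
have hBA : \sum_(2 <= j < K.+1) beta j * gS j + \sum_(2 <= k < K.+1) alpha k * gS k
    = \sum_(2 <= j < K.+1) quad x (Km (sep C j)) - \sum_(2 <= j < K.+1) ld (sep C j).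
  rewrite -big_split -sumrB; apply: eq_big_nat => j hj /=.
  by rewrite -mulrDl addrC Hab // mul1r.
have hB : \sum_(2 <= j < K.+1) beta j * gS j =
   \sum_(2 <= j < K.+1) quad x (Km (sep C j)) - \sum_(2 <= j < K.+1) ld (sep C j)
   - \sum_(2 <= k < K.+1) alpha k * gS k by rewrite -hBA addrK.
rewrite hB; ring.
Qed.

End Main.

Theorem mainTheorem1 (N K : nat) (E : rel 'I_N) (C : nat -> {set 'I_N})
  (Sigma : 'M[R]_N) (alpha beta : nat -> R)
  (* undirected simple graph *)
  (HEsym : symmetric E) (HEirr : irreflexive E)
  (* C_1, ..., C_K are exactly the maximal cliques, listed without repetition *)
  (Hmax : forall k, (1 <= k <= K)%N -> maxset (is_clique E) (C k))
  (Hall : forall A, maxset (is_clique E) A -> exists2 k, (1 <= k <= K)%N & C k = A)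
  (Hinj : forall k l, (1 <= k <= K)%N -> (1 <= l <= K)%N -> C k = C l -> k = l)
  (* perfect sequence *)
  (Hperf : forall k, (2 <= k <= K)%N -> exists2 j, (1 <= j < k)%N & sep C k \subset C j)
  (* Sigma symmetric positive definite *)
  (HSsym : Sigma^T = Sigma)
  (HSpd : forall y : 'cV[R]_N, y != 0 -> 0 < (y^T *m Sigma *m y) ord0 ord0)
  (* Sigma Markov w.r.t. the graph *)
  (HSmarkov : forall i j : 'I_N, i != j -> ~~ E i j -> invmx Sigma i j = 0)
  (* coefficients *)
  (Hab : forall k, (2 <= k <= K)%N -> alpha k + beta k = 1)
  (x : 'cV[R]_N) :
  Tstat Sigma x = \sum_(1 <= k < K.+1) Lstat K C Sigma alpha beta k x.
Proof.
exact: (final HEsym Hall Hperf HSsym HSpd HSmarkov x Hab).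
Qed.
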